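(* Let $M=P+\varepsilon D\in\mathbb{DH}[t]$ be monic with $\operatorname{mrpf}(P)=1$, and write $P\overline{P}=\prod_{i=1}^m N_i^{n_i}$ with pairwise coprime, irreducible, monic quadratic polynomials $N_1,\dots,N_m\in\mathbb{R}[t]$ and positive integers $n_1,\dots,n_m$. Then $M$ admits a factorization $M=(t-h_1)(t-h_2)\cdots(t-h_k)$ with $h_1,\dots,h_k\in\mathbb{DH}$ if and only if $\prod_{i=1}^m N_i^{n_i-1}$ divides the norm polynomial $M\overline{M}$ in $\mathbb{D}[t]$ (equivalently, $\prod_{i=1}^m N_i^{n_i-1}$ divides the dual part $P\overline{D}+D\overline{P}$ of $M\overline{M}$ in $\mathbb{R}[t]$).
   Context: $\mathbb{D}=\mathbb{R}[\varepsilon]/\langle\varepsilon^2\rangle$ denotes the dual numbers. $\mathbb{H}$ denotes the real quaternions with basis $1,\mathbf{i},\mathbf{j},\mathbf{k}$, $\mathbf{i}^2=\mathbf{j}^2=\mathbf{k}^2=\mathbf{i}\mathbf{j}\mathbf{k}=-1$. The dual quaternions $\mathbb{DH}$ are the $\mathbb{D}$-algebra $\mathbb{H}\otimes_{\mathbb{R}}\mathbb{D}$ ($\varepsilon$ commutes with $\mathbf{i},\mathbf{j},\mathbf{k}$). The conjugate of $q=q_0+q_1\mathbf{i}+q_2\mathbf{j}+q_3\mathbf{k}$ ($q_i\in\mathbb{D}$) is $\overline{q}=q_0-q_1\mathbf{i}-q_2\mathbf{j}-q_3\mathbf{k}$. $\mathbb{DH}[t]$ is the ring of polynomials with dual quaternion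 coefficients in which $t$ commutes with all coefficients. For $M=\sum m_it^i$, $\overline{M}=\sum\overline{m_i}t^i$ and the norm polynomial is $M\overline{M}=\overline{M}M\in\mathbb{D}[t]$. Every $M\in\mathbb{DH}[t]$ is written $M=P+\varepsilon D$ with $P,D\in\mathbb{H}[t]$ (primal and dual part); then $M\overline{M}=P\overline{P}+\varepsilon(P\overline{D}+D\overline{P})$. For $P\in\mathbb{H}[t]$, $\operatorname{mrpf}(P)$ denotes the maximal (monic) real polynomial factor of $P$, i.e. the monic $c\in\mathbb{R}[t]$ of largest degree with $P=cP'$ for some $P'\in\mathbb{H}[t]$; $\operatorname{mrpf}(P)=1$ means $P$ has no real polynomial factor of positive degree. *)

(* Defs.v *)
From HB Require Import structures.
From mathcomp Require Import all_boot all_order all_algebra.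
From mathcomp Require Import reals.
Set Implicit Arguments. Unset Strict Implicit. Unset Printing Implicit Defensive.
Import Order.TTheory GRing.Theory Num.Theory.
Local Open Scope ring_scope.

(* Quaternions with coefficients in a commutative ring A:
   q = qr + qi i + qj j + qk k.  With A = R we get H, with A = {poly R} we get
   H[t] (t central, i.e. H (x) R[t]). *)
Record quat (A : Type) := Quat { qr : A; qi : A; qj : A; qk : A }.

Section Quat.
Variable A : comNzRingType.
Definition q0 : quat A := Quat 0 0 0 0.
Definition q1 : quat A := Quat 1 0 0 0.
Definition qadd (a b : quat A) : quat A :=
  Quat (qr a + qr b) (qi a + qi b) (qj a + qj b) (qk a + qk b).
Definition qopp (a : quat A) : quat A := Quat (- qr a) (- qi a) (- qj a) (- qk a).
(* Hamilton product: i^2 = j^2 = k^2 = ijk = -1 *)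
Definition qmul (a b : quat A) : quat A :=
  Quat (qr a * qr b - qi a * qi b - qj a * qj b - qk a * qk b)
       (qr a * qi b + qi a * qr b + qj a * qk b - qk a * qj b)
       (qr a * qj b - qi a * qk b + qj a * qr b + qk a * qi b)
       (qr a * qk b + qi a * qj b - qj a * qi b + qk a * qr b).
Definition qconj (a : quat A) : quat A := Quat (qr a) (- qi a) (- qj a) (- qk a).
Definition qscale (c : A) (a : quat A) : quat A :=
  Quat (c * qr a) (c * qi a) (c * qj a) (c * qk a).
End Quat.

(* Dual quaternions over A: prim + eps * dual, eps^2 = 0, eps central. *)
Record dquat (A : Type) := DQuat { prim : quat A; dual : quat A }.

Section DQuat.
Variable A : comNzRingType.
Definition dq1 : dquat A := DQuat (q1 A) (q0 A).
Definition dqadd (x y : dquat A) : dquat A :=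
  DQuat (qadd (prim x) (prim y)) (qadd (dual x) (dual y)).
Definition dqopp (x : dquat A) : dquat A := DQuat (qopp (prim x)) (qopp (dual x)).
Definition dqsub (x y : dquat A) : dquat A := dqadd x (dqopp y).
Definition dqmul (x y : dquat A) : dquat A :=
  DQuat (qmul (prim x) (prim y))
        (qadd (qmul (prim x) (dual y)) (qmul (dual x) (prim y))).
Definition dqconj (x : dquat A) : dquat A := DQuat (qconj (prim x)) (qconj (dual x)).
End DQuat.

(* Polynomials: H[t] = quat {poly R}, DH[t] = dquat {poly R}. *)
Section DQPoly.
Variable R : realType.

Definition quatC (h : quat R) : quat {poly R} :=
  Quat (qr h)%:P (qi h)%:P (qj h)%:P (qk h)%:P.
Definition dqC (h : dquat R) : dquat {poly R} := DQuat (quatC (prim h)) (quatC (dual h)).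
Definition dqX : dquat {poly R} := DQuat (Quat 'X 0 0 0) (q0 _).
Definition dqlin (h : dquat R) : dquat {poly R} := dqsub dqX (dqC h).

Definition qcoef (P : quat {poly R}) (i : nat) : quat R :=
  Quat (qr P)`_i (qi P)`_i (qj P)`_i (qk P)`_i.
Definition dqcoef (M : dquat {poly R}) (i : nat) : dquat R :=
  DQuat (qcoef (prim M) i) (qcoef (dual M) i).
Definition qsize (P : quat {poly R}) : nat :=
  maxn (maxn (size (qr P)) (size (qi P))) (maxn (size (qj P)) (size (qk P))).
(* 1 + degree of M (0 iff M = 0) *)
Definition dqsize (M : dquat {poly R}) : nat := maxn (qsize (prim M)) (qsize (dual M)).
Definition dqmonic (M : dquat {poly R}) : Prop :=
  (0 < dqsize M)%N /\ dqcoef M (dqsize M).-1 = dq1 R.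

Definition mrpf_one (P : quat {poly R}) : Prop :=
  ~ exists (c : {poly R}) (P' : quat {poly R}), (1 < size c)%N /\ P = qscale c P'.

(* P Pbar, which is real: its scalar part *)
Definition qnormpoly (P : quat {poly R}) : {poly R} := qr (qmul P (qconj P)).

(* the norm polynomial M Mbar in D[t], given by (primal part, dual part)
   = scalar parts of the (real-valued) products *)
Definition dqnormpoly (M : dquat {poly R}) : {poly R} * {poly R} :=
  let N := dqmul M (dqconj M) in (qr (prim N), qr (dual N)).

(* multiplication in D[t] = {poly R} + eps {poly R} *)
Definition dnum_mul (x y : {poly R} * {poly R}) : {poly R} * {poly R} :=
  (x.1 * y.1, x.1 * y.2 + x.2 * y.1).
Definition dnum_dvd (F : {poly R}) (x : {poly R} * {poly R}) : Prop :=
  exists y : {poly R} * {poly R}, x = dnum_mul (F, 0) y.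

Definition dq_linfact (M : dquat {poly R}) : Prop :=
  exists hs : seq (dquat R), M = foldr (@dqmul _) (dq1 _) (map dqlin hs).
End DQPoly.

(* Main.v *)
Require Import Defs.
From HB Require Import structures.
From mathcomp Require Import all_boot all_order all_algebra.
From mathcomp Require Import reals.
From mathcomp Require Import ring lra zify.
Import Order.TTheory GRing.Theory Num.Theory.
Local Open Scope ring_scope.
Set Implicit Arguments. Unset Strict Implicit. Unset Printing Implicit Defensive.


Definition Xq (R : realType) : quat {poly R} := Quat 'X 0 0 0.
Definition tq (R : realType) (p : quat R) : quat {poly R} := qadd (Xq R) (qopp (quatC p)).
Definition qlin (R : realType) (a b : quat R) : quat {poly R} :=
  Quat ((qr a)%:P * 'X + (qr b)%:P) ((qi a)%:P * 'X + (qi b)%:P)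
       ((qj a)%:P * 'X + (qj b)%:P) ((qk a)%:P * 'X + (qk b)%:P).
Definition Np (R : realType) (p : quat R) : {poly R} := qnormpoly (tq p).
Definition qn (R : realType) (a : quat R) : R := qr a * qr a + qi a * qi a + qj a * qj a + qk a * qk a.

Ltac qdes := repeat match goal with
  | [ q : quat _ |- _ ] => destruct q
  | [ q : dquat _ |- _ ] => destruct q end.
Ltac qunf := cbv beta iota delta [Np qnormpoly dqnormpoly dnum_mul dqlin dqsub dqmul dqadd dqopp dqconj dq1 dqC dqX
   tq Xq qlin quatC qmul qadd qopp qconj qscale q0 q1 qr qi qj qk prim dual fst snd qn].
Ltac qring := intros; qdes; qunf; try (congr DQuat); try (congr Quat); try (congr pair); ring.

Lemma qlin_mul (R : realType) (N : {poly R}) (n1 n0 : R) (a b c d : quat R) :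
  N = 'X * 'X + n1%:P * 'X + n0%:P ->
  qmul (qlin a b) (qlin c d) =
  qadd (qlin (qadd (qadd (qmul a d) (qmul b c)) (qopp (qscale n1 (qmul a c))))
             (qadd (qmul b d) (qopp (qscale n0 (qmul a c)))))
       (qscale N (quatC (qmul a c))).
Proof. move=> ->; qring. Qed.

Lemma qcongM (R : realType) (N : {poly R}) (A B K L : quat {poly R}) :
  qmul (qadd A (qscale N K)) (qadd B (qscale N L)) =
  qadd (qmul A B) (qscale N (qadd (qadd (qmul K B) (qmul A L)) (qscale N (qmul K L)))).
Proof. qring. Qed.

Lemma qcongC (R : realType) (N : {poly R}) (A K : quat {poly R}) :
  qconj (qadd A (qscale N K)) = qadd (qconj A) (qscale N (qconj K)).
Proof. qring. Qed.

Lemma qlinC (R : realType) (a b : quat R) : qconj (qlin a b) = qlin (qconj a) (qconj b).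
Proof. qring. Qed.

Lemma qcongD (R : realType) (N : {poly R}) (A B K L : quat {poly R}) :
  qadd (qadd A (qscale N K)) (qadd B (qscale N L)) = qadd (qadd A B) (qscale N (qadd K L)).
Proof. qring. Qed.

Lemma qlinD (R : realType) (a b c d : quat R) :
  qadd (qlin a b) (qlin c d) = qlin (qadd a c) (qadd b d).
Proof. qring. Qed.

Lemma qnormM (R : realType) (X Y : quat {poly R}) :
  qnormpoly (qmul X Y) = qnormpoly X * qnormpoly Y.
Proof. qring. Qed.

Lemma dqmulA (R : realType) (X Y Z : dquat {poly R}) :
  dqmul X (dqmul Y Z) = dqmul (dqmul X Y) Z.
Proof. qring. Qed.

Lemma dqmul1 (R : realType) (X : dquat {poly R}) : dqmul X (dq1 _) = X.
Proof. qring. Qed.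
Lemma dq1mul (R : realType) (X : dquat {poly R}) : dqmul (dq1 _) X = X.
Proof. qring. Qed.

Lemma dqconjM (R : realType) (X Y : dquat {poly R}) :
  dqconj (dqmul X Y) = dqmul (dqconj Y) (dqconj X).
Proof. qring. Qed.

Definition dscal (R : realType) (x : {poly R} * {poly R}) : dquat {poly R} :=
  DQuat (Quat x.1 0 0 0) (Quat x.2 0 0 0).

Lemma dqnorm_scal (R : realType) (Y : dquat {poly R}) :
  dqmul Y (dqconj Y) = dscal (dqnormpoly Y).
Proof. rewrite /dscal; qring. Qed.

Lemma dscal_comm (R : realType) (x : {poly R} * {poly R}) (Z : dquat {poly R}) :
  dqmul (dscal x) Z = dqmul Z (dscal x).
Proof. rewrite /dscal; case: x => a b; qring. Qed.

Lemma dscal_mul (R : realType) (x y : {poly R} * {poly R}) :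
  dqmul (dscal x) (dscal y) = dscal (dnum_mul x y).
Proof. rewrite /dscal; case: x => a b; case: y => c d; qring. Qed.

Lemma dqnormM (R : realType) (X Y : dquat {poly R}) :
  dqnormpoly (dqmul X Y) = dnum_mul (dqnormpoly X) (dqnormpoly Y).
Proof.
have H : forall Z, dqnormpoly Z = ((qr (prim (dqmul Z (dqconj Z)))), qr (dual (dqmul Z (dqconj Z)))) by [].
rewrite [LHS]H dqconjM -dqmulA [dqmul Y (dqmul _ _)]dqmulA dqnorm_scal dscal_comm dqmulA dqnorm_scal.
rewrite dscal_mul. case: (dnum_mul _ _) => a b. by [].
Qed.


Lemma quad_coef (R : realType) (a b : R) (j : nat) :
  ('X * 'X + a%:P * 'X + b%:P : {poly R})`_j =
  if j == 2%N then 1 else if j == 1%N then a else if j == 0%N then b else 0.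
Proof.
rewrite !coefD -expr2 coefXn coefCM coefX coefC.
by case: j => [|[|[|j]]] /=; rewrite ?mulr0 ?mulr1 ?add0r ?addr0.
Qed.

Lemma size3P (R : realType) (X : {poly R}) :
  (forall j, (3 <= j)%N -> X`_j = 0) -> X`_2 = 1 -> X \is monic /\ size X = 3%N.
Proof.
move=> h3 h2.
have s3 : (size X <= 3)%N by apply/leq_sizeP.
have s3' : (2 < size X)%N.
  rewrite ltnNge; apply/negP => /= hs.
  by move: h2; rewrite nth_default //; move/esym/eqP; rewrite oner_eq0.
have eS : size X = 3%N by apply/eqP; rewrite eqn_leq s3 s3'.
split; last by []. by rewrite monicE /lead_coef eS h2.
Qed.

Lemma N_form (R : realType) (N : {poly R}) :
  N \is monic -> size N = 3%N -> N = 'X * 'X + (N`_1)%:P * 'X + (N`_0)%:P.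
Proof.
move=> hm hs; apply/polyP => j; rewrite quad_coef.
case: j => [|[|[|j]]] //=.
  by move: hm; rewrite monicE /lead_coef hs => /eqP.
by rewrite nth_default // hs.
Qed.

Lemma Np_form (R : realType) (p : quat R) :
  Np p = 'X * 'X + (- (2 * qr p))%:P * 'X + (qn p)%:P.
Proof. case: p => a b c d; rewrite /qn; qring. Qed.

Lemma Np_monic (R : realType) (p : quat R) : Np p \is monic /\ size (Np p) = 3%N.
Proof.
apply: size3P => [j hj|]; rewrite Np_form quad_coef //.
by case: j hj => [|[|[|j]]].
Qed.

Lemma decomp (R : realType) (N : {poly R}) (X : {poly R}) :
  N \is monic -> size N = 3%N ->
  exists c1 c0 Y, X = c1%:P * 'X + c0%:P + N * Y.
Proof.
move=> hm hs.
have N0 : N != 0 by rewrite -size_poly_eq0 hs.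
exists (modp X N)`_1, (modp X N)`_0, (divp X N).
have hr : (size (modp X N) < 3)%N by rewrite -hs ltn_modp.
have e : modp X N = ((modp X N)`_1)%:P * 'X + ((modp X N)`_0)%:P.
  apply/polyP => j; rewrite coefD coefCM coefX coefC.
  case: j => [|[|j]] /=; rewrite ?mulr0 ?mulr1 ?add0r ?addr0 //.
  by rewrite nth_default // -ltnS (leq_trans hr).
rewrite {1}(divp_eq X N) {1}e; ring.
Qed.

Lemma qdecomp (R : realType) (N : {poly R}) (P : quat {poly R}) :
  N \is monic -> size N = 3%N ->
  exists a b K, P = qadd (qlin a b) (qscale N K).
Proof.
move=> hm hs; case: P => x y z w.
have [a1 [b1 [K1 e1]]] := decomp x hm hs.
have [a2 [b2 [K2 e2]]] := decomp y hm hs.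
have [a3 [b3 [K3 e3]]] := decomp z hm hs.
have [a4 [b4 [K4 e4]]] := decomp w hm hs.
exists (Quat a1 a2 a3 a4), (Quat b1 b2 b3 b4), (Quat K1 K2 K3 K4).
by rewrite /qadd /qlin /qscale /= -e1 -e2 -e3 -e4.
Qed.

Lemma lin_dvd0 (R : realType) (N : {poly R}) (c1 c0 : R) :
  size N = 3%N -> N %| c1%:P * 'X + c0%:P -> c1 = 0 /\ c0 = 0.
Proof.
move=> hs hd.
set q := c1%:P * 'X + c0%:P in hd.
have sq : (size q <= 2)%N.
  apply/leq_sizeP => j hj; rewrite /q coefD coefCM coefX coefC.
  by case: j hj => [|[|j]] //= _; rewrite mulr0 addr0.
have q0 : q = 0.
  case: (eqVneq q 0) => // qn0.
  by have := dvdp_leq qn0 hd; rewrite hs => /leq_trans /(_ sq).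
have h1 := congr1 (fun r : {poly R} => r`_1) q0; have h0 := congr1 (fun r : {poly R} => r`_0) q0.
move: h1 h0; rewrite /q !coefD !coefCM !coefX !coefC /= ?coef0 ?polyseq0 ?nth_nil.
by rewrite mulr1 mulr0 addr0 add0r => -> ->.
Qed.


Definition dec (m : nat) (n : 'I_m -> nat) (i : 'I_m) : 'I_m -> nat :=
  fun j => if j == i then (n j).-1 else n j.

Lemma prod_dec (R : realType) m (N : 'I_m -> {poly R}) (n : 'I_m -> nat) i :
  (0 < n i)%N -> \prod_(j < m) N j ^+ n j = N i * \prod_(j < m) N j ^+ dec n i j.
Proof.
move=> hi; rewrite (bigD1 i) //= [X in _ = _ * X](bigD1 i) //= /dec eqxx mulrA -exprS prednK //.
congr (_ * _); apply: eq_bigr => j /negbTE ->. by [].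
Qed.

Lemma F_dec2 (R : realType) m (N : 'I_m -> {poly R}) (n : 'I_m -> nat) i :
  (1 < n i)%N -> \prod_(j < m) N j ^+ (n j).-1 = N i * \prod_(j < m) N j ^+ (dec n i j).-1.
Proof.
move=> hi; rewrite (bigD1 i) //= [X in _ = _ * X](bigD1 i) //= /dec eqxx mulrA -exprS.
have -> : ((n i).-1.-1.+1 = (n i).-1)%N by lia.
congr (_ * _); apply: eq_bigr => j /negbTE ->. by [].
Qed.

Lemma F_dec1 (R : realType) m (N : 'I_m -> {poly R}) (n : 'I_m -> nat) i :
  n i = 1%N -> \prod_(j < m) N j ^+ (n j).-1 = \prod_(j < m) N j ^+ (dec n i j).-1.
Proof.
move=> hi; apply: eq_bigr => j _; rewrite /dec; case: eqP => // ->. by rewrite hi.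
Qed.

Lemma prod_dvd (R : realType) m (N : 'I_m -> {poly R}) (k n : 'I_m -> nat) :
  (forall j, k j <= n j)%N -> \prod_(j < m) N j ^+ k j %| \prod_(j < m) N j ^+ n j.
Proof.
move=> h.
have -> : \prod_(j < m) N j ^+ n j = \prod_(j < m) N j ^+ k j * \prod_(j < m) N j ^+ (n j - k j).
  rewrite -big_split; apply: eq_bigr => j _ /=; rewrite -exprD subnKC //.
exact: dvdp_mulr.
Qed.

Lemma coprime_prod (R : realType) m (N : 'I_m -> {poly R}) (e : 'I_m -> nat) i :
  (forall i j, i != j -> coprimep (N i) (N j)) -> e i = 0%N ->
  coprimep (N i) (\prod_(j < m) N j ^+ e j).
Proof.
move=> hc hei; elim/big_rec: _ => [|j x _ hx]; first exact: coprimep1.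
rewrite coprimepMr hx andbT.
case: (eqVneq j i) => [->|hji]; first by rewrite hei expr0 coprimep1.
by apply: coprimep_expr; apply: hc; rewrite eq_sym.
Qed.

Lemma not_dvd_prod (R : realType) m (N : 'I_m -> {poly R}) (e : 'I_m -> nat) i :
  (forall i j, i != j -> coprimep (N i) (N j)) -> (forall i, size (N i) = 3%N) -> e i = 0%N ->
  ~~ (N i %| \prod_(j < m) N j ^+ e j).
Proof.
move=> hc hs hei; apply/negP => hd.
have := coprimep_dvdl hd (coprime_prod hc hei).
by rewrite coprimepp hs.
Qed.

Lemma dvd_is_N (R : realType) m (N : 'I_m -> {poly R}) (n : 'I_m -> nat) (q : {poly R}) :
  (forall i, N i \is monic) -> (forall i, size (N i) = 3%N) ->
  (forall i, irreducible_poly (N i)) ->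
  (forall i j, i != j -> coprimep (N i) (N j)) ->
  q \is monic -> size q = 3%N -> q %| \prod_(j < m) N j ^+ n j ->
  exists i, q = N i /\ (0 < n i)%N.
Proof.
move=> hm hs hirr hc qm qs hd.
case: (boolP [exists i, ~~ coprimep q (N i)]) => [/existsP [i hi]|].
  have hg : gcdp q (N i) %= N i.
    apply: (snd (hirr i)); first by rewrite -coprimep_def.
    exact: dvdp_gcdr.
  have hNq : N i %| q by rewrite -(eqp_dvdl _ hg) dvdp_gcdl.
  have eqq : N i = q.
    apply/eqP; rewrite -eqp_monic //; rewrite -dvdp_size_eqp // qs hs //.
  exists i; split=> //.
  rewrite lt0n; apply/negP => /eqP h0.
  have := not_dvd_prod hc hs h0; by rewrite eqq hd.
rewrite negb_exists => /forallP hall.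
have hcp : coprimep q (\prod_(j < m) N j ^+ n j).
  elim/big_rec: _ => [|j x _ hx]; first exact: coprimep1.
  rewrite coprimepMr hx andbT; apply: coprimep_expr.
  by have := hall j; rewrite negbK.
have := coprimep_dvdl hd hcp; by rewrite coprimepp qs.
Qed.


Definition qinv (R : realType) (a : quat R) : quat R := qscale (qn a)^-1 (qconj a).

Lemma qn_eq0 (R : realType) (a : quat R) : qn a = 0 -> a = q0 R.
Proof.
case: a => a0 a1 a2 a3; rewrite /qn /= => h.
have h0 : a0 = 0 by nra. have h1 : a1 = 0 by nra.
have h2 : a2 = 0 by nra. have h3 : a3 = 0 by nra.
by rewrite h0 h1 h2 h3.
Qed.

Lemma dvd_cong (R : realType) (N : {poly R}) (X Y : quat {poly R}) :
  (N %| qr (qadd X (qscale N Y))) = (N %| qr X).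
Proof. by rewrite /= dvdp_addl // dvdp_mulr. Qed.

Lemma prim_ident (R : realType) (a p : quat R) (K : quat {poly R}) :
  qadd (qlin a (qopp (qmul a p))) (qscale (Np p) K) =
  qmul (qadd (qmul K (tq (qconj p))) (quatC a)) (tq p).
Proof. qring. Qed.

Lemma prim_factor (R : realType) (N : {poly R}) (P : quat {poly R}) :
  N \is monic -> size N = 3%N -> mrpf_one P -> N %| qnormpoly P ->
  exists p P', P = qmul P' (tq p) /\ Np p = N.
Proof.
move=> hm hs hmr hd.
have hN := N_form hm hs.
have [a [b [K eP]]] := qdecomp P hm hs.
move: hd; rewrite /qnormpoly eP qcongC qlinC qcongM (qlin_mul _ _ _ _ hN) !dvd_cong.
move=> /(lin_dvd0 hs) [].
set n1 := N`_1; set n0 := N`_0.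
case: a eP => a0 a1 a2 a3 eP; case: b eP => b0 b1 b2 b3 eP /= e1 e0.
case: (eqVneq (qn (Quat a0 a1 a2 a3)) 0) => hqa.
  have ha := qn_eq0 hqa; case: ha => h0 h1 h2 h3; subst a0 a1 a2 a3.
  have hb : qn (Quat b0 b1 b2 b3) = 0 by rewrite /qn /=; nra.
  have := qn_eq0 hb; case => h0 h1 h2 h3; subst b0 b1 b2 b3.
  exfalso; apply: hmr; exists N, K; split; first by rewrite hs.
  rewrite eP; qring.
set a := Quat a0 a1 a2 a3.
set p := qopp (qmul (qinv a) (Quat b0 b1 b2 b3)).
have hb : Quat b0 b1 b2 b3 = qopp (qmul a p).
  move: hqa; rewrite /p /qinv /a /qn; qunf => hqa; congr Quat; field; exact: hqa.
have hNp : Np p = N.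
  rewrite Np_form hN; congr (_ * _ + _%:P * _ + _%:P).
    move: hqa; rewrite /p /qinv /a /qn; qunf => hqa.
    apply: (mulIf hqa); rewrite /n1 in e1.
    transitivity (2*(a0*b0+a1*b1+a2*b2+a3*b3)); first by field.
    nra.
  transitivity ((b0*b0+b1*b1+b2*b2+b3*b3)/(qn a)).
    move: hqa; rewrite /p /qinv /a /qn; qunf => hqa; field; exact: hqa.
  move: hqa; rewrite /a /qn /= => hqa.
  apply: (mulIf hqa); rewrite divfK //; rewrite /n0 in e0; nra.
exists p, (qadd (qmul K (tq (qconj p))) (quatC a)); split=> //.
by rewrite hb -hNp prim_ident.
Qed.


Definition pv (R : realType) (p : quat R) : quat R := Quat 0 (qi p) (qj p) (qk p).

Definition wq (R : realType) (x p z d : quat R) : quat R :=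
  qadd z (qadd d (qmul x (qadd (qmul d p) (qopp (qmul (qconj p) d))))).

Lemma P_ident (R : realType) (a u p : quat R) (U : quat {poly R}) :
  qmul (qadd (qlin u (qadd a (qopp (qmul u (qconj p))))) (qscale (Np p) U)) (tq p) =
  qadd (qlin a (qopp (qmul a p))) (qscale (Np p) (qadd (quatC u) (qmul U (tq p)))).
Proof. qring. Qed.

Lemma dual_ident (R : realType) (a u p e c d : quat R) (U W : quat {poly R}) :
  qadd (qlin e (qadd c (qopp (qmul e p)))) (qscale (Np p) W) =
  qadd (qadd (qmul (qadd (qlin u (qadd a (qopp (qmul u (qconj p))))) (qscale (Np p) U))
                   (qadd (q0 _) (qopp (quatC d))))
             (qmul (qadd (quatC (qadd e (qmul u d))) (qmul (qadd W (qmul U (quatC d))) (tq (qconj p))))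
                   (tq p)))
       (quatC (qadd c (qadd (qmul a d) (qmul u (qadd (qmul d p) (qopp (qmul (qconj p) d))))))).
Proof. qring. Qed.

Lemma w_ident (R : realType) (x p z : quat R) (d0 b : R) :
  wq x p z (qadd (qopp z) (qadd (qscale (-(2*d0)) (qmul x (pv p))) (qscale (2*b) x))) =
  qadd (qscale (- (2 * ((1 - 2*(qi x * qi p + qj x * qj p + qk x * qk p)) * d0 - 2 * qr x * b + qr z)))
                (qmul x (pv p)))
       (qscale (2 * (2 * qr x * (qi p * qi p + qj p * qj p + qk p * qk p) * d0
                     + (1 - 2*(qi x * qi p + qj x * qj p + qk x * qk p)) * b
                     + (qi z * qi p + qj z * qj p + qk z * qk p))) x).
Proof. (rewrite /wq /pv; qring). Qed.


Lemma qcongDD (R : realType) (N : {poly R}) (L C1 C2 : quat {poly R}) :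
  qadd (qadd L (qscale N C1)) (qscale N C2) = qadd L (qscale N (qadd C1 C2)).
Proof. qring. Qed.

Lemma Np_hN (R : realType) (p : quat R) :
  Np p = 'X * 'X + (- (2 * qr p))%:P * 'X + (qn p)%:P.
Proof. exact: Np_form. Qed.

Lemma E_cong (R : realType) (a p e z : quat R) (K W : quat {poly R}) :
  Np p %| qr (qadd (qmul (qadd (qlin a (qopp (qmul a p))) (qscale (Np p) K))
                         (qconj (qadd (qlin e (qadd (qmul a z) (qopp (qmul e p)))) (qscale (Np p) W))))
                   (qmul (qadd (qlin e (qadd (qmul a z) (qopp (qmul e p)))) (qscale (Np p) W))
                         (qconj (qadd (qlin a (qopp (qmul a p))) (qscale (Np p) K))))) ->
  qn a * qr z = 0 /\ qn a * (qi p * qi z + qj p * qj z + qk p * qk z) = 0.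
Proof.
have hN := Np_hN p.
rewrite !qcongC !qlinC !qcongM !(qlin_mul _ _ _ _ hN) !qcongDD qcongD qlinD dvd_cong.
move=> /(lin_dvd0 (proj2 (Np_monic p))) [].
case: a => a0 a1 a2 a3; case: p hN => p0 p1 p2 p3 hN; case: e => e0 e1 e2 e3; case: z => z0 z1 z2 z3.
rewrite /qn; qunf => H1 H0.
have h1 : (a0 * a0 + a1 * a1 + a2 * a2 + a3 * a3) * z0 = 0 by lra.
have h1p : p0 * ((a0 * a0 + a1 * a1 + a2 * a2 + a3 * a3) * z0) = 0 by rewrite h1 mulr0.
split=> //; lra.
Qed.

Lemma lin0_dvd (R : realType) (N : {poly R}) (a b : quat R) :
  qr a = 0 -> qr b = 0 -> N %| qr (qlin a b).
Proof. by move=> ha hb; rewrite /qlin /= ha hb mul0r add0r dvdp0. Qed.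

Lemma Pn_cong (R : realType) (a x p : quat R) (U : quat {poly R}) :
  qr x = 0 -> 1 - 2 * (qi x * qi p + qj x * qj p + qk x * qk p) = 0 ->
  Np p %| qnormpoly (qadd (qlin (qmul a x) (qadd a (qopp (qmul (qmul a x) (qconj p))))) (qscale (Np p) U)).
Proof.
have hN := Np_hN p.
rewrite /qnormpoly qcongC qlinC qcongM (qlin_mul _ _ _ _ hN) qcongDD dvd_cong.
case: a => a0 a1 a2 a3; case: x => x0 x1 x2 x3; case: p hN => p0 p1 p2 p3 hN hx hA.
rewrite /= in hx hA.
subst x0.
apply: lin0_dvd; rewrite /qn; qunf.
  ring.
transitivity ((a0*a0+a1*a1+a2*a2+a3*a3) * (1 - 2 * (x1 * p1 + x2 * p2 + x3 * p3))); first ring.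
by rewrite hA mulr0.
Qed.

Lemma solve2 (R : realType) (A B C r1 r2 : R) :
  A * A + B * C != 0 \/ (r1 = 0 /\ r2 = 0) ->
  exists d0 b, A * d0 - B * b + r1 = 0 /\ C * d0 + A * b + r2 = 0.
Proof.
case=> [hD|[-> ->]]; last by exists 0, 0; split; ring.
exists (- (r1 * A + B * r2) / (A * A + B * C)), ((C * r1 - A * r2) / (A * A + B * C)).
split; field; exact: hD.
Qed.

Lemma a0_ident (R : realType) (u p : quat R) (U : quat {poly R}) :
  qmul (qadd (qlin u (qadd (q0 R) (qopp (qmul u (qconj p))))) (qscale (Np p) U)) (tq p) =
  qscale (Np p) (qadd (quatC u) (qmul U (tq p))).
Proof. qring. Qed.

Lemma qinv_r (R : realType) (a u : quat R) : qn a != 0 -> qmul a (qmul (qinv a) u) = u.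
Proof.
case: a => a0 a1 a2 a3; case: u => u0 u1 u2 u3; rewrite /qinv /qn; qunf => ha.
congr Quat; field; exact: ha.
Qed.

Lemma aw_ident (R : realType) (a x z d p : quat R) :
  qadd (qmul a z) (qadd (qmul a d) (qmul (qmul a x) (qadd (qmul d p) (qopp (qmul (qconj p) d))))) =
  qmul a (wq x p z d).
Proof. rewrite /wq; qring. Qed.

Lemma qadd_C0 (R : realType) (X : quat {poly R}) (a : quat R) :
  qadd X (quatC (qmul a (q0 R))) = X.
Proof. qring. Qed.

Lemma qscale00 (R : realType) (y x : quat R) :
  qadd (qscale (- (2 * 0)) y) (qscale (2 * 0) x) = q0 R.
Proof. qring. Qed.

Lemma dual_factor (R : realType) (P' D : quat {poly R}) (p : quat R) :
  qi p * qi p + qj p * qj p + qk p * qk p != 0 ->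
  mrpf_one (qmul P' (tq p)) ->
  (Np p %| qnormpoly P' ->
   Np p %| qr (qadd (qmul (qmul P' (tq p)) (qconj D)) (qmul D (qconj (qmul P' (tq p)))))) ->
  exists d D', D = qadd (qmul P' (qadd (q0 _) (qopp (quatC d)))) (qmul D' (tq p)).
Proof.
move=> hrho hmr himp.
have [hm hs] := Np_monic p.
have [u [v [U eP]]] := qdecomp P' hm hs.
have [e [f [W eD]]] := qdecomp D hm hs.
have [a ev] : exists a, v = qadd a (qopp (qmul u (qconj p))).
  by exists (qadd (qmul u (qconj p)) v); qring.
have [c ef] : exists c, f = qadd c (qopp (qmul e p)).
  by exists (qadd (qmul e p) f); qring.
rewrite ev in eP; rewrite ef in eD; clear ev ef v f.
have ha : qn a != 0.
  apply/negP => /eqP /qn_eq0 ha0.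
  apply: hmr; exists (Np p), (qadd (quatC u) (qmul U (tq p))); split; first by rewrite hs.
  by rewrite eP ha0 a0_ident.
rewrite -(qinv_r u ha) in eP; rewrite -(qinv_r c ha) in eD.
move: eP eD; set x := qmul (qinv a) u; set z := qmul (qinv a) c.
clearbody x z => eP eD; clear u c.
have hdeg : (1 - 2*(qi x * qi p + qj x * qj p + qk x * qk p)) * (1 - 2*(qi x * qi p + qj x * qj p + qk x * qk p))
   + (2 * qr x) * (2 * qr x * (qi p * qi p + qj p * qj p + qk p * qk p)) != 0
   \/ (qr z = 0 /\ (qi z * qi p + qj z * qj p + qk z * qk p) = 0).
  case: (eqVneq ((1 - 2*(qi x * qi p + qj x * qj p + qk x * qk p)) * (1 - 2*(qi x * qi p + qj x * qj p + qk x * qk p))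
   + (2 * qr x) * (2 * qr x * (qi p * qi p + qj p * qj p + qk p * qk p))) 0) => hD; last by left.
  right.
  have hpos : 0 <= qi p * qi p + qj p * qj p + qk p * qk p by nra.
  move: hD hpos hrho; set A := 1 - 2 * _; set rho := _ + _ + qk p * qk p; set x0 := qr x => hD hpos hrho.
  have hs0 : 0 <= x0 * x0 * rho by apply: mulr_ge0 => //; nra.
  have hA2 : 0 <= A * A by nra.
  have hsq : x0 * x0 * rho = 0 by apply/eqP; rewrite eq_le hs0 andbT; nra.
  have hx0 : x0 = 0.
    move: hsq => /eqP; rewrite mulf_eq0 (negbTE hrho) orbF mulf_eq0 orbb => /eqP //.
  have hA0 : A = 0.
    move: hD; rewrite hx0 !mulr0 ?mul0r addr0 => /eqP; rewrite mulf_eq0 orbb => /eqP //.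
  have hdv := @Pn_cong R a x p U hx0 hA0.
  rewrite -eP in hdv.
  have := himp hdv.
  rewrite eP P_ident eD => /E_cong [].
  move=> /eqP; rewrite mulf_eq0 (negbTE ha) /= => /eqP hz0.
  move=> /eqP; rewrite mulf_eq0 (negbTE ha) /= => /eqP hz1.
  split=> //; rewrite -hz1; ring.
have [d0 [b [h1 h2]]] := solve2 hdeg.
pose d := qadd (qopp z) (qadd (qscale (-(2*d0)) (qmul x (pv p))) (qscale (2*b) x)).
have hw : wq x p z d = q0 R.
  rewrite /d w_ident.
  have -> : (1 - 2 * (qi x * qi p + qj x * qj p + qk x * qk p)) * d0 - 2 * qr x * b + qr z = 0.
    by rewrite -h1.
  have -> : 2 * qr x * (qi p * qi p + qj p * qj p + qk p * qk p) * d0 +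
      (1 - 2 * (qi x * qi p + qj x * qj p + qk x * qk p)) * b +
      (qi z * qi p + qj z * qj p + qk z * qk p) = 0.
    by rewrite -h2.
  exact: qscale00.
exists d, (qadd (quatC (qadd e (qmul (qmul a x) d))) (qmul (qadd W (qmul U (quatC d))) (tq (qconj p)))).
rewrite eD (dual_ident a (qmul a x) p e (qmul a z) d U W) aw_ident hw qadd_C0 -eP.
by [].
Qed.


Definition dq0 (R : realType) : dquat R := DQuat (q0 R) (q0 R).
Definition monicK (R : realType) (M : dquat {poly R}) (k : nat) :=
  dqcoef M k = dq1 R /\ forall j, (k < j)%N -> dqcoef M j = dq0 R.

Lemma qcoefD (R : realType) (X Y : quat {poly R}) j :
  qcoef (qadd X Y) j = qadd (qcoef X j) (qcoef Y j).
Proof. by rewrite /qcoef /qadd /= !coefD. Qed.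
Lemma qcoefN (R : realType) (X : quat {poly R}) j :
  qcoef (qopp X) j = qopp (qcoef X j).
Proof. by rewrite /qcoef /qopp /= !coefN. Qed.
Lemma qcoefMC (R : realType) (X : quat {poly R}) (h : quat R) j :
  qcoef (qmul X (quatC h)) j = qmul (qcoef X j) h.
Proof. by rewrite /qcoef /qmul /quatC /= !(coefD, coefB, coefN, coefMC). Qed.
Lemma qcoefMX (R : realType) (X : quat {poly R}) j :
  qcoef (qmul X (Xq R)) j = if j is j'.+1 then qcoef X j' else q0 R.
Proof.
rewrite /qcoef /qmul /Xq /= ?mulr0 ?subr0 ?addr0 ?mul0r ?add0r ?addr0 ?sub0r ?subr0 !coefMX.
by case: j.
Qed.

Lemma prim_lin (R : realType) (P : quat {poly R}) (p : quat R) :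
  qmul P (tq p) = qadd (qmul P (Xq R)) (qopp (qmul P (quatC p))).
Proof. qring. Qed.
Lemma dual_lin (R : realType) (P D : quat {poly R}) (p d : quat R) :
  qadd (qmul P (qadd (q0 _) (qopp (quatC d)))) (qmul D (tq p)) =
  qadd (qopp (qmul P (quatC d))) (qadd (qmul D (Xq R)) (qopp (qmul D (quatC p)))).
Proof. qring. Qed.

Lemma T2 (R : realType) (a b c e : quat R) (p d : quat R) :
  DQuat (qadd a (qopp (qmul b p))) (qadd (qopp (qmul b d)) (qadd c (qopp (qmul e p)))) =
  dqadd (DQuat a c) (dqopp (dqmul (DQuat b e) (DQuat p d))).
Proof. qring. Qed.
Lemma dqcoef_lin (R : realType) (M : dquat {poly R}) (h : dquat R) j :
  dqcoef (dqmul M (dqlin h)) j.+1 = dqadd (dqcoef M j) (dqopp (dqmul (dqcoef M j.+1) h)).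
Proof.
case: M => P D; case: h => p d.
have E : dqmul (DQuat P D) (dqlin (DQuat p d)) =
   DQuat (qmul P (tq p)) (qadd (qmul P (qadd (q0 _) (qopp (quatC d)))) (qmul D (tq p))) by [].
rewrite E.
have -> : dqcoef (DQuat (qmul P (tq p)) (qadd (qmul P (qadd (q0 _) (qopp (quatC d)))) (qmul D (tq p)))) j.+1
  = DQuat (qcoef (qmul P (tq p)) j.+1) (qcoef (qadd (qmul P (qadd (q0 _) (qopp (quatC d)))) (qmul D (tq p))) j.+1) by [].
rewrite prim_lin dual_lin !(qcoefD, qcoefN, qcoefMC, qcoefMX).
exact: T2.
Qed.

Lemma coef_big (R : realType) (M : dquat {poly R}) j :
  (dqsize M <= j)%N -> dqcoef M j = dq0 R.
Proof.
case: M => [[a b c d] [e f g h]]; rewrite /dqsize /qsize /= => hj.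
rewrite /dqcoef /qcoef /dq0 /q0 /= !nth_default //; lia.
Qed.

Lemma dq0_simp (R : realType) (X h : dquat R) : dqadd X (dqmul (dq0 R) h) = X.
Proof. rewrite /dq0; qring. Qed.

Lemma monicK_lin (R : realType) (M : dquat {poly R}) (h : dquat R) k :
  monicK (dqmul M (dqlin h)) k.+1 -> monicK M k.
Proof.
move=> [h1 h2].
have key : forall j, dqcoef M j = dqadd (dqcoef (dqmul M (dqlin h)) j.+1) (dqmul (dqcoef M j.+1) h).
  move=> j; rewrite dqcoef_lin; case: (dqcoef M j) => [[? ? ? ?] [? ? ? ?]];
  case: (dqcoef M j.+1) => [[? ? ? ?] [? ? ? ?]]; qring.
have hz : forall i j, (dqsize M - j <= i)%N -> (k < j)%N -> dqcoef M j = dq0 R.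
  elim=> [|i IH] j hi hkj.
    by apply: coef_big; lia.
  case: (leqP (dqsize M) j) => hj; first exact: coef_big.
  rewrite key h2 ?IH //; try lia.
  by rewrite dq0_simp.
split; last by move=> j hj; apply: (hz (dqsize M - j)%N).
rewrite key h1 (hz (dqsize M - k.+1)%N) //.
by rewrite dq0_simp.
Qed.

Lemma poly_const (R : realType) (X : {poly R}) (c : R) :
  X`_0 = c -> (forall j, (0 < j)%N -> X`_j = 0) -> X = c%:P.
Proof.
move=> h0 hj; apply/polyP => j; rewrite coefC; case: j => [|j] //=; exact: hj.
Qed.

Lemma monicK0 (R : realType) (M : dquat {poly R}) : monicK M 0 -> M = dq1 _.
Proof.
case: M => [[a b c d] [e f g h]] [h1 h2].
have H : forall j, (0 < j)%N -> [/\ a`_j = 0, b`_j = 0, c`_j = 0, d`_j = 0 &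
   [/\ e`_j = 0, f`_j = 0, g`_j = 0 & h`_j = 0]].
  move=> j /h2; rewrite /dqcoef /qcoef /dq0 /q0; cbn [prim dual qr qi qj qk].
  by case=> -> -> -> -> -> -> -> ->.
move: h1; rewrite /dqcoef /qcoef /dq1 /q1 /q0; cbn [prim dual qr qi qj qk].
case=> a0 b0 c0 d0 e0 f0 g0 h0.
congr DQuat; congr Quat.
- by rewrite -polyC1; apply: poly_const a0 _ => j /H [].
- by rewrite -polyC0; apply: poly_const b0 _ => j /H [].
- by rewrite -polyC0; apply: poly_const c0 _ => j /H [].
- by rewrite -polyC0; apply: poly_const d0 _ => j /H [].
- by rewrite -polyC0; apply: poly_const e0 _ => j /H [] _ _ _ _ [].
- by rewrite -polyC0; apply: poly_const f0 _ => j /H [] _ _ _ _ [].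
- by rewrite -polyC0; apply: poly_const g0 _ => j /H [] _ _ _ _ [].
- by rewrite -polyC0; apply: poly_const h0 _ => j /H [] _ _ _ _ [].
Qed.


Lemma foldr_rcons_lin (R : realType) (hs : seq (dquat R)) (h : dquat R) :
  foldr (@dqmul _) (dq1 _) (map (@dqlin R) (rcons hs h)) =
  dqmul (foldr (@dqmul _) (dq1 _) (map (@dqlin R) hs)) (dqlin h).
Proof.
elim: hs => [|a hs IH]; cbn [foldr map rcons].
  by rewrite dqmul1 dq1mul.
by rewrite IH dqmulA.
Qed.

Lemma qscale_mul (R : realType) (c : {poly R}) (X Y : quat {poly R}) :
  qmul (qscale c X) Y = qscale c (qmul X Y).
Proof. qring. Qed.

Lemma norm_size (R : realType) (P D : quat {poly R}) k :
  monicK (DQuat P D) k -> size (qnormpoly P) = (k.*2.+1)%N.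
Proof.
case: P => a b c d [h1 h2].
have ha : a`_k = 1 /\ b`_k = 0 /\ c`_k = 0 /\ d`_k = 0.
  move: h1; rewrite /dqcoef /qcoef /dq1 /q1 /q0; cbn [prim dual qr qi qj qk].
  by case=> -> -> -> -> _ _ _ _.
have hz : forall j, (k < j)%N -> a`_j = 0 /\ b`_j = 0 /\ c`_j = 0 /\ d`_j = 0.
  move=> j /h2; rewrite /dqcoef /qcoef /dq0 /q0; cbn [prim dual qr qi qj qk].
  by case=> -> -> -> -> _ _ _ _.
have sa : size a = k.+1.
  apply/eqP; rewrite eqn_leq; apply/andP; split.
    by apply/leq_sizeP => j hj; have [] := hz j hj.
  rewrite ltnNge; apply/negP => hs.
  by move: ha => [+ _]; rewrite nth_default //; move/esym/eqP; rewrite oner_eq0.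
have sx : forall x : {poly R}, x`_k = 0 -> (forall j, (k < j)%N -> x`_j = 0) -> (size x <= k)%N.
  move=> x hk hj; apply/leq_sizeP => j; rewrite leq_eqVlt => /orP [/eqP <- //|]; exact: hj.
have [ha0 [hb0 [hc0 hd0]]] := ha.
have sb : (size b <= k)%N by apply: sx => // j /hz [_ [-> _]].
have sc : (size c <= k)%N by apply: sx => // j /hz [_ [_ [-> _]]].
have sd : (size d <= k)%N by apply: sx => // j /hz [_ [_ [_ ->]]].
have -> : qnormpoly (Quat a b c d) = a * a + (b * b + c * c + d * d) by rewrite /qnormpoly; qring.
have a0 : a != 0 by rewrite -size_poly_eq0 sa.
have saa : size (a * a) = (k.*2.+1)%N by rewrite size_mul // sa; lia.
rewrite size_addl saa //.
apply: (leq_ltn_trans (size_add _ _)); rewrite gtn_max; apply/andP; split.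
  apply: (leq_ltn_trans (size_add _ _)); rewrite gtn_max; apply/andP; split.
    apply: (leq_ltn_trans (size_mul_leq _ _)); lia.
  apply: (leq_ltn_trans (size_mul_leq _ _)); lia.
apply: (leq_ltn_trans (size_mul_leq _ _)); lia.
Qed.

Lemma rho_ne0 (R : realType) (p : quat R) (Ni : {poly R}) :
  irreducible_poly Ni -> size Ni = 3%N -> Np p = Ni ->
  qi p * qi p + qj p * qj p + qk p * qk p != 0.
Proof.
move=> hirr hs hNp; apply/negP => /eqP h0.
have h1 : qi p = 0 by nra. have h2 : qj p = 0 by nra. have h3 : qk p = 0 by nra.
have e : Np p = ('X - (qr p)%:P) * ('X - (qr p)%:P).
  rewrite Np_form /qn h1 h2 h3; ring.
have hd : ('X - (qr p)%:P) %| Ni by rewrite -hNp e dvdp_mulr.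
have hne : size ('X - (qr p)%:P) != 1%N by rewrite size_XsubC.
have he := (snd hirr) _ hne hd.
by have := eqp_size he; rewrite size_XsubC hs.
Qed.

Lemma if_dir (R : realType) m (N : 'I_m -> {poly R}) :
  (forall i, N i \is monic) -> (forall i, size (N i) = 3%N) -> (forall i, irreducible_poly (N i)) ->
  (forall i j, i != j -> coprimep (N i) (N j)) ->
  forall k (M : dquat {poly R}) (n : 'I_m -> nat), monicK M k -> mrpf_one (prim M) ->
  qnormpoly (prim M) = \prod_(j < m) N j ^+ n j ->
  \prod_(j < m) N j ^+ (n j).-1 %| (dqnormpoly M).2 -> dq_linfact M.
Proof.
move=> hm hs hirr hc; elim=> [|k IH] M n hk hmr hP hF.
  by exists [::]; rewrite (monicK0 hk).
case: M hk hmr hP hF => P D hk hmr hP hF.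
change (mrpf_one P) in hmr; change (qnormpoly P = \prod_(j < m) N j ^+ n j) in hP.
have [i hi] : exists i, (0 < n i)%N.
  case: (boolP [exists i, (0 < n i)%N]) => [/existsP [i hi]|]; first by exists i.
  rewrite negb_exists => /forallP hn; exfalso.
  have h1 : \prod_(j < m) N j ^+ n j = 1.
    apply: big1 => j _; have := hn j; rewrite lt0n negbK => /eqP ->; exact: expr0.
  have := norm_size hk; rewrite hP h1 size_poly1; lia.
have hNi0 : N i != 0 by rewrite -size_poly_eq0 hs.
have hdv : N i %| qnormpoly P by rewrite hP (prod_dec _ hi) dvdp_mulr.
have [p [P' [eP hNp]]] := prim_factor (hm i) (hs i) hmr hdv.
have hrho := rho_ne0 (hirr i) (hs i) hNp.
have hP' : qnormpoly P' = \prod_(j < m) N j ^+ dec n i j.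
  move: hP; rewrite eP qnormM -/(Np p) hNp (prod_dec _ hi) => e.
  by apply: (mulIf hNi0); rewrite e mulrC.
have himp : Np p %| qnormpoly P' ->
   Np p %| qr (qadd (qmul (qmul P' (tq p)) (qconj D)) (qmul D (qconj (qmul P' (tq p))))).
  rewrite hNp hP' => hd.
  have h2 : (1 < n i)%N.
    rewrite ltnNge; apply/negP => hle.
    have hdi : dec n i i = 0%N by rewrite /dec eqxx; lia.
    by have := not_dvd_prod hc hs hdi; rewrite hd.
  move: hF; rewrite (F_dec2 _ h2) -eP => hF.
  exact: dvdp_trans (dvdp_mulr _ (dvdpp _)) hF.
have [d [D' eD]] := dual_factor hrho (eq_ind _ _ hmr _ eP) himp.
have eM : DQuat P D = dqmul (DQuat P' D') (dqlin (DQuat p d)) by rewrite eP eD.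
have hk' : monicK (DQuat P' D') k by apply: (@monicK_lin _ _ (DQuat p d)); rewrite -eM.
have hmr' : mrpf_one P'.
  move=> [c [X [hc1 eX]]]; apply: hmr; exists c, (qmul X (tq p)); split=> //.
  by rewrite eP eX qscale_mul.
have hF' : \prod_(j < m) N j ^+ (dec n i j).-1 %| (dqnormpoly (DQuat P' D')).2.
  move: hF; rewrite eM dqnormM /dnum_mul; cbn [fst snd].
  have -> : (dqnormpoly (DQuat P' D')).1 = \prod_(j < m) N j ^+ dec n i j := hP'.
  have -> : (dqnormpoly (dqlin (DQuat p d))).1 = N i := hNp.
  rewrite dvdp_addr; last first.
    apply: dvdp_mulr; apply: prod_dvd => j; rewrite /dec; case: eqP => _ //; exact: leq_pred.
  case: (ltngtP (n i) 1) => hni.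
  - lia.
  - rewrite (F_dec2 _ hni) [_ * N i]mulrC dvdp_mul2l //.
  - rewrite (F_dec1 _ hni) Gauss_dvdpl // coprimep_sym; apply: coprime_prod => //.
    by rewrite /dec eqxx hni.
have [hs' ehs'] := IH _ _ hk' hmr' hP' hF'.
exists (rcons hs' (DQuat p d)).
by rewrite eM ehs' foldr_rcons_lin.
Qed.


Lemma norm_dq1 (R : realType) : (dqnormpoly (dq1 {poly R})).2 = 0.
Proof. qring. Qed.

Lemma onlyif_dir (R : realType) m (N : 'I_m -> {poly R}) :
  (forall i, N i \is monic) -> (forall i, size (N i) = 3%N) -> (forall i, irreducible_poly (N i)) ->
  (forall i j, i != j -> coprimep (N i) (N j)) ->
  forall (hs : seq (dquat R)) (n : 'I_m -> nat),
  (dqnormpoly (foldr (@dqmul _) (dq1 _) (map (@dqlin R) hs))).1 = \prod_(j < m) N j ^+ n j ->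
  \prod_(j < m) N j ^+ (n j).-1 %| (dqnormpoly (foldr (@dqmul _) (dq1 _) (map (@dqlin R) hs))).2.
Proof.
move=> hm hs hirr hc; elim=> [|h l IH] n; cbn [foldr map].
  by rewrite norm_dq1 dvdp0.
rewrite dqnormM /dnum_mul; cbn [fst snd].
set X := foldr _ _ _.
have hq : (dqnormpoly (dqlin h)).1 = Np (prim h) by [].
rewrite hq => hP.
have [qm qs] := Np_monic (prim h).
have hd : Np (prim h) %| \prod_(j < m) N j ^+ n j by rewrite -hP dvdp_mulr.
have [i [eqi hi]] := dvd_is_N hm hs hirr hc qm qs hd.
have hNi0 : N i != 0 by rewrite -size_poly_eq0 hs.
have hA : (dqnormpoly X).1 = \prod_(j < m) N j ^+ dec n i j.
  apply: (mulfI hNi0); rewrite -(prod_dec _ hi) -hP eqi //.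
have hB := IH _ hA.
apply: dvdp_add.
  case: (ltngtP (n i) 1) => hni.
  - lia.
  - by rewrite (F_dec2 _ hni) eqi; apply: dvdp_mul.
  - by rewrite (F_dec1 _ hni); apply: dvdp_mull.
apply: dvdp_mull; rewrite hA; apply: prod_dvd => j; rewrite /dec; case: eqP => _ //; exact: leq_pred.
Qed.

Lemma dnum_dvd_iff (R : realType) (F : {poly R}) (x : {poly R} * {poly R}) :
  F %| x.1 -> (dnum_dvd F x <-> F %| x.2).
Proof.
case: x => a b; cbn [fst snd] => ha; split.
  by move=> [[y1 y2] [_ ->]]; rewrite mul0r addr0 dvdp_mulr.
move=> hb; exists (a %/ F, b %/ F); rewrite /dnum_mul; cbn [fst snd].
by rewrite mul0r addr0 mulrC divpK // mulrC divpK.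
Qed.

Unset Implicit Arguments.

Theorem theorem1 (R : realType) (M : dquat {poly R})
  (m : nat) (N : 'I_m -> {poly R}) (n : 'I_m -> nat) :
  dqmonic M ->
  mrpf_one (prim M) ->
  (forall i, N i \is monic) ->
  (forall i, size (N i) = 3%N) ->
  (forall i, irreducible_poly (N i)) ->
  (forall i j, i != j -> coprimep (N i) (N j)) ->
  (forall i, (0 < n i)%N) ->
  qnormpoly (prim M) = \prod_(i < m) N i ^+ n i ->
  (dq_linfact M <-> dnum_dvd (\prod_(i < m) N i ^+ (n i).-1) (dqnormpoly M))
  /\
  (dnum_dvd (\prod_(i < m) N i ^+ (n i).-1) (dqnormpoly M) <->
   (\prod_(i < m) N i ^+ (n i).-1) %| (dqnormpoly M).2).
Proof.
move=> hmon hmr hm hs hirr hc hpos hP.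
have hF1 : \prod_(i < m) N i ^+ (n i).-1 %| (dqnormpoly M).1.
  have -> : (dqnormpoly M).1 = qnormpoly (prim M) by [].
  by rewrite hP; apply: prod_dvd => j; exact: leq_pred.
have H2 := dnum_dvd_iff hF1.
split=> //; rewrite H2; split.
  move=> [hs' eM].
  have hP' : (dqnormpoly (foldr (@dqmul _) (dq1 _) (map (@dqlin R) hs'))).1 = \prod_(j < m) N j ^+ n j.
    by rewrite -eM.
  by rewrite eM; apply: onlyif_dir.
move=> hF.
have [hsz hc1] := hmon.
have hk : monicK M (dqsize M).-1.
  split=> // j hj; apply: coef_big; lia.
exact: (if_dir hm hs hirr hc hk hmr hP hF).
Qed.
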